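(* Let $k$ be a positive integer, let $\Gamma$ be a $k$-free group in which the centralizer of every nontrivial element is infinite cyclic, and let $(L,(C_v)_{v\in L^{(0)}})$ be a $\Gamma$-labeled complex. Fix an integer $r$ with $0<r\le k-1$. Let $W\subset|L|$ be a saturated, connected subset such that every simplex contained in $W$ has internal rank exactly $r$. Then the local rank of $\Theta(W)$ is at most $r$.
   Context: A group is $k$-free if every subgroup of rank at most $k$ is free (rank = minimal number of generators). A $\Gamma$-labeled complex is a simplicial complex $L$ (geometric, consisting of open simplices, not necessarily locally finite, with $|L|$ the union of its simplices in the weak topology) together with an assignment to each vertex $v$ of a maximal cyclic subgroup $C_v$ of $\Gamma$. A subset $W\subset|L|$ is saturated if it is a union of open simplices of $L$. For a simplex $\sigma$, $\Theta(\sigma)=\langle C_v: v\text{ a vertex of }\sigma\rangle$, and the internal rank is $\mathrm{IR}(\sigma)=\max\{\operatorname{rank}\Theta(\tau):\tau\text{ a face of }\sigma\text{ (including }\sigma)\}$. For saturated $W$, $\Theta(W)$ is the subgroup generated by all $C_v$ with $v$ a vertex of a simplex contained in $W$. A group $G$ has local rank $\le k$ if every finitely generated subgroup of $G$ is contained in a subgroup of $G$ of rank $\le k$; the local rank is the least such $k$ (or $\infty$). *)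

(* Defs.v *)
From Stdlib Require Import List ZArith Relations.
Import ListNotations.
Set Implicit Arguments.

Record group := Group {
  carrier :> Type;
  gmul : carrier -> carrier -> carrier;
  gone : carrier;
  ginv : carrier -> carrier;
  gmulA : forall x y z, gmul x (gmul y z) = gmul (gmul x y) z;
  gmul1l : forall x, gmul gone x = x;
  gmul1r : forall x, gmul x gone = x;
  gmulVl : forall x, gmul (ginv x) x = gone;
  gmulVr : forall x, gmul x (ginv x) = gone
}.

Section GroupDefs.
Variable G : group.

Definition subset (A B : G -> Prop) : Prop := forall x, A x -> B x.

Definition is_subgroup (H : G -> Prop) : Prop :=
  H (gone G) /\ (forall x y, H x -> H y -> H (gmul G x y)) /\
  (forall x, H x -> H (ginv G x)).

Definition gen (S : G -> Prop) : G -> Prop :=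
  fun x => forall H, is_subgroup H -> subset S H -> H x.

Definition gen_list (l : list G) : G -> Prop := gen (fun y => In y l).

Definition rank_le (H : G -> Prop) (n : nat) : Prop :=
  exists l : list G, length l <= n /\ forall x, H x <-> gen_list l x.

Definition rank_eq (H : G -> Prop) (n : nat) : Prop :=
  rank_le H n /\ forall m, m < n -> ~ rank_le H m.

Definition fin_gen (H : G -> Prop) : Prop := exists n, rank_le H n.

Fixpoint gpow (x : G) (n : nat) : G :=
  match n with O => gone G | S m => gmul G x (gpow x m) end.

Definition zpow (x : G) (z : Z) : G :=
  match z with
  | Z0 => gone G
  | Zpos p => gpow x (Pos.to_nat p)
  | Zneg p => ginv G (gpow x (Pos.to_nat p))
  end.

Definition is_cyclic (H : G -> Prop) : Prop :=
  exists c, forall x, H x <-> exists z : Z, x = zpow c z.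

Definition is_infinite_cyclic (H : G -> Prop) : Prop :=
  exists c, (forall x, H x <-> exists z : Z, x = zpow c z) /\
            (forall z : Z, zpow c z = gone G -> z = 0%Z).

Definition maximal_cyclic (C : G -> Prop) : Prop :=
  is_cyclic C /\ forall D, is_cyclic D -> subset C D -> subset D C.

Definition centralizer (g : G) : G -> Prop := fun x => gmul G x g = gmul G g x.

Fixpoint eval_word (w : list (G * bool)) : G :=
  match w with
  | [] => gone G
  | (b, s) :: w' => gmul G (if s then b else ginv G b) (eval_word w')
  end.

Fixpoint reduced (w : list (G * bool)) : Prop :=
  match w with
  | [] => True
  | (b, s) :: w' =>
      match w' with
      | [] => True
      | (b', s') :: _ => ~ (b = b' /\ s <> s')
      end /\ reduced w'
  end.

Definition free_basis (H B : G -> Prop) : Prop :=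
  (forall x, H x <-> gen B x) /\
  forall w : list (G * bool), w <> [] -> Forall (fun p => B (fst p)) w ->
    reduced w -> eval_word w <> gone G.

Definition is_free (H : G -> Prop) : Prop := exists B, free_basis H B.

Definition k_free (k : nat) : Prop :=
  forall H, rank_le H k -> is_free H.

Definition local_rank_le (H : G -> Prop) (n : nat) : Prop :=
  forall F, fin_gen F -> subset F H ->
    exists K, rank_le K n /\ subset K H /\ subset F K.

End GroupDefs.

Arguments subset {G}. Arguments is_subgroup {G}. Arguments gen {G}.
Arguments gen_list {G}. Arguments rank_le {G}. Arguments rank_eq {G}.
Arguments fin_gen {G}. Arguments gpow {G}. Arguments zpow {G}.
Arguments is_cyclic {G}. Arguments is_infinite_cyclic {G}.
Arguments maximal_cyclic {G}. Arguments centralizer {G}.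
Arguments eval_word {G}. Arguments reduced {G}. Arguments free_basis {G}.
Arguments is_free {G}. Arguments local_rank_le {G}.

Record complex := Complex {
  vert : Type;
  simp : (vert -> Prop) -> Prop;
  simp_fin : forall s, simp s -> exists l : list vert, forall v, s v <-> In v l;
  simp_ne : forall s, simp s -> exists v, s v;
  simp_face : forall s t, simp s -> (exists v, t v) -> (forall v, t v -> s v) -> simp t;
  simp_vert : forall v, simp (fun w => w = v)
}.

Definition same_simplex {L : complex} (s t : vert L -> Prop) : Prop :=
  forall v, s v <-> t v.

Definition face {L : complex} (t s : vert L -> Prop) : Prop :=
  (exists v, t v) /\ forall v, t v -> s v.

(* A saturated subset W of |L| is represented by the set of (open) simplices
   it consists of. *)
Definition saturated {L : complex} (W : (vert L -> Prop) -> Prop) : Prop :=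
  (forall s, W s -> simp L s) /\
  (forall s t, W s -> same_simplex s t -> W t).

(* Connectedness of a saturated set: two open simplices of W are adjacent
   when one is a face of the other; W is connected iff this adjacency graph
   is connected (equivalent to topological connectedness in the weak topology). *)
Definition sat_adj {L : complex} (W : (vert L -> Prop) -> Prop) (s t : vert L -> Prop) : Prop :=
  W s /\ W t /\ (face s t \/ face t s).

Definition sat_connected {L : complex} (W : (vert L -> Prop) -> Prop) : Prop :=
  forall s t, W s -> W t -> clos_refl_trans _ (sat_adj W) s t.

Definition labeling {G : group} {L : complex} (C : vert L -> G -> Prop) : Prop :=
  forall v, maximal_cyclic (C v).

Definition Theta_simplex {G : group} {L : complex} (C : vert L -> G -> Prop)
  (s : vert L -> Prop) : G -> Prop :=
  gen (fun x => exists v, s v /\ C v x).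

Definition IR_eq {G : group} {L : complex} (C : vert L -> G -> Prop)
  (s : vert L -> Prop) (r : nat) : Prop :=
  (forall t, face t s -> rank_le (Theta_simplex C t) r) /\
  (exists t, face t s /\ rank_eq (Theta_simplex C t) r).

Definition Theta_sat {G : group} {L : complex} (C : vert L -> G -> Prop)
  (W : (vert L -> Prop) -> Prop) : G -> Prop :=
  gen (fun x => exists s v, W s /\ s v /\ C v x).

(* Main.v *)
Require Import Defs.
From Stdlib Require Import List ZArith Relations.
From Stdlib Require Import Classical ClassicalEpsilon Lia Arith.
From mathcomp Require all_boot all_fingroup zify.
Import ListNotations.

Definition lett (T : group) (x : T) (s : bool) : T := if s then x else ginv T x.
Fixpoint ievalT (T : group) (tau : nat -> T) (w : list (nat * bool)) : T :=
  match w with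
  | [] => gone T
  | (i, s) :: w' => gmul T (lett T (tau i) s) (ievalT T tau w')
  end.
Fixpoint ireduced (w : list (nat * bool)) : Prop :=
  match w with
  | [] => True
  | (i, s) :: w' =>
      match w' with
      | [] => True
      | (i', s') :: _ => ~ (i = i' /\ s <> s')
      end /\ ireduced w'
  end.

Module PermPart.
Import all_boot all_fingroup.
Set Implicit Arguments. Unset Strict Implicit.
Import zify.

Lemma ext_perm (T : finType) (D : {set T}) (f : T -> T) :
  {in D &, injective f} -> {s : {perm T} | forall x, x \in D -> s x = f x}.
Proof.
move=> finj.
set e1 := enum (~: D); set e2 := enum (~: (f @: D)).
have se : size e1 = size e2.
  rewrite /e1 /e2 -!cardE cardsCs [#|~: (f @: D)|]cardsCs !setCK (card_in_imset finj) //.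
pose g x := if x \in D then f x else nth x e2 (index x e1).
have ginj : injective g.
  move=> x y; rewrite /g.
  have Hn : forall z, z \notin D -> nth z e2 (index z e1) \in e2.
    move=> z zD; apply: mem_nth; rewrite -se index_mem /e1 mem_enum inE zD //.
  case: ifP => xD; case: ifP => yD.
  - by apply: finj.
  - move=> E; have := Hn y (negbT yD); rewrite -E /e2 mem_enum inE.
    by rewrite (imset_f f xD).
  - move=> E; have := Hn x (negbT xD); rewrite E /e2 mem_enum inE.
    by rewrite (imset_f f yD).
  - move=> E.
    have ix : index x e1 < size e2 by rewrite -se index_mem /e1 mem_enum inE xD.
    have iy : index y e1 < size e2 by rewrite -se index_mem /e1 mem_enum inE yD.
    have ue2 : uniq e2 by apply: enum_uniq.
    have Ei : index x e1 = index y e1.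
      apply/eqP; rewrite -(nth_uniq x ix iy ue2).
      by rewrite E (set_nth_default x y iy).
    have x1 : x \in e1 by rewrite /e1 mem_enum inE xD.
    have y1 : y \in e1 by rewrite /e1 mem_enum inE yD.
    by rewrite -(nth_index x x1) Ei (set_nth_default y x) ?nth_index // index_mem.
exists (perm ginj) => x xD; by rewrite permE /g xD.
Qed.

Definition pg (m : nat) : Defs.group :=
  @Defs.Group {perm 'I_m} mulg 1%g invg (@mulgA _) (@mul1g _) (@mulg1 _) (@mulVg _) (@mulgV _).

Lemma ireduced_nth (w : seq (nat * bool)) : ireduced w ->
  forall j i s, j.+1 < size w -> nth (0, true) w j = (i, s) ->
  nth (0, true) w j.+1 = (i, ~~ s) -> False.
Proof.
elim: w => [|[i0 s0] w IH] //=.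
move=> [Hh Hr] [|j] i s /= Hj.
- case: w Hh IH Hr Hj => [|[i1 s1] w] //= Hh _ _ _ [E0 E0'] [E1 E2]; subst.
  apply: Hh; split => //; by case: s.
- by apply: IH.
Qed.

Lemma rf (w : seq (nat * bool)) : w <> [::] -> ireduced w ->
  exists m (tau : nat -> pg m), ievalT (pg m) tau w <> gone (pg m).
Proof.
move=> wne wred.
set L := size w.
have Lpos : 0 < L by case: w wne {wred} @L.
pose d := (0, true).
pose D (i : nat) := [set p : 'I_L.+1 | ((p < L) && (nth d w p == (i, true)))
   || ((0 < p) && (nth d w p.-1 == (i, false)))].
pose f (i : nat) (p : 'I_L.+1) : 'I_L.+1 :=
  if (p < L) && (nth d w p == (i, true)) then inord p.+1
  else if (0 < p) && (nth d w p.-1 == (i, false)) then inord p.-1 else p.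
have red := ireduced_nth wred.
have Hf : forall i (p : 'I_L.+1), p \in D i ->
    (p < L /\ nth d w p = (i,true) /\ f i p = inord p.+1) \/
    (0 < p /\ nth d w p.-1 = (i,false) /\ f i p = inord p.-1).
  move=> i p; rewrite inE /f; case: ifP => [/andP[H1 /eqP H2] _|_ /= /andP[H1 /eqP H2]].
  - by left.
  - by right; rewrite H1 H2 eqxx.
have iK : forall a, a < L.+1 -> nat_of_ord (inord a : 'I_L.+1) = a.
  by move=> a; apply: inordK.
have finj : forall i, {in D i &, injective (f i)}.
  move=> i p q Hp Hq.
  have pb := ltn_ord p; have qb := ltn_ord q.
  case: (Hf i p Hp) => [[p1 [p2 ->]]|[p1 [p2 ->]]];
  case: (Hf i q Hq) => [[q1 [q2 ->]]|[q1 [q2 ->]]];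
  move/(congr1 (@nat_of_ord _)); rewrite !iK; try lia; move=> E; try (apply: val_inj; simpl; lia).
  - exfalso; apply: (red p i true); first lia; first exact p2.
    have -> : p.+1 = q.-1 by lia.
    exact q2.
  - exfalso; apply: (red q i true); first lia; first exact q2.
    have -> : q.+1 = p.-1 by lia.
    exact p2.
pose sig i := sval (ext_perm (finj i)).
have sigE : forall i p, p \in D i -> sig i p = f i p.
  move=> i p pD; exact: (svalP (ext_perm (finj i)) p pD).
pose tau (i : nat) : pg L.+1 := sig i.
have step : forall j, j < L -> forall i s, nth d w j = (i, s) ->
    (lett (pg L.+1) (tau i) s : {perm 'I_L.+1}) (inord j) = inord j.+1.
  move=> j jL i [] E /=.
  - rewrite /tau sigE; last by rewrite inE iK ?E ?eqxx ?jL //; lia.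
    by rewrite /f iK ?E ?eqxx ?jL //; lia.
  - have H : sig i (inord j.+1) = inord j.
      rewrite sigE; last by rewrite inE iK //= E eqxx orbT.
      rewrite /f iK //=.
      case: ifP => [/andP[H1 /eqP H2]|_]; last by rewrite E eqxx.
      exfalso; exact: (red j i false H1 E H2).
    by rewrite -{1}H permK.
have main : forall k, k <= L ->
    (ievalT (pg L.+1) tau (drop (L - k) w) : {perm 'I_L.+1}) (inord (L - k)) = inord L.
  elim=> [|k IH] kL.
  - by rewrite subn0 drop_size /= perm1.
  - have jL : L - k.+1 < L by lia.
    rewrite (drop_nth d jL).
    case E: (nth d w (L - k.+1)) => [i s] /=.
    rewrite permM (step _ jL i s E).
    have -> : (L - k.+1).+1 = L - k by lia.
    apply: IH; lia.
exists L.+1, tau => H.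
have := main L (leqnn L); rewrite subnn drop0 H /= perm1.
move/(congr1 (@nat_of_ord _)); rewrite !iK //; lia.
Qed.

Lemma fin_surj (m n : nat) (Phi : (nat -> pg m) -> (nat -> pg m)) :
  (forall t t', (forall i, lt i n -> Phi t i = Phi t' i) -> forall i, lt i n -> t i = t' i) ->
  forall ts, exists t, forall i, lt i n -> Phi t i = ts i.
Proof.
move=> Hinj ts.
pose ext (g : {ffun 'I_n -> {perm 'I_m}}) (j : nat) : pg m :=
  odflt (1%g : {perm 'I_m}) (omap g (insub j)).
have extE : forall g (o : 'I_n), ext g o = g o.
  by move=> g o; rewrite /ext valK.
pose F (g : {ffun 'I_n -> {perm 'I_m}}) : {ffun 'I_n -> {perm 'I_m}} :=
  [ffun o : 'I_n => Phi (ext g) o].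
have Finj : injective F.
  move=> g g' E; apply/ffunP => o.
  rewrite -!extE; apply: Hinj; last by apply/ltP.
  move=> i /ltP il.
  move/ffunP: E => /(_ (Ordinal il)); by rewrite /F !ffunE.
have [G FG GF] := injF_bij Finj.
exists (ext (G [ffun o : 'I_n => ts o])) => i /ltP il.
move/ffunP: (GF [ffun o : 'I_n => ts o]) => /(_ (Ordinal il)).
by rewrite /F !ffunE.
Qed.

End PermPart.


Section GLemmas.
Variable T : group.
Lemma mul_cancel_l (x y z : T) : gmul T x y = gmul T x z -> y = z.
Proof.
  intro E. rewrite <- (gmul1l T y), <- (gmul1l T z), <- (gmulVl T x), <- !gmulA, E. reflexivity.
Qed.
Lemma inv_uniq (x y : T) : gmul T x y = gone T -> y = ginv T x.
Proof.
  intro E. apply (mul_cancel_l x). rewrite E, gmulVr. reflexivity.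
Qed.
Lemma inv_mul (x y : T) : ginv T (gmul T x y) = gmul T (ginv T y) (ginv T x).
Proof.
  symmetry. apply inv_uniq. rewrite <- gmulA, (gmulA T y), gmulVr, gmul1l, gmulVr. reflexivity.
Qed.
Lemma inv_inv (x : T) : ginv T (ginv T x) = x.
Proof. symmetry. apply inv_uniq. apply gmulVl. Qed.
Lemma inv_one : ginv T (gone T) = gone T.
Proof. symmetry. apply inv_uniq. apply gmul1l. Qed.
Lemma inv_eq1 (x : T) : ginv T x = gone T -> x = gone T.
Proof. intro E. rewrite <- (inv_inv x), E. apply inv_one. Qed.
End GLemmas.

Definition evalW {A : Type} (T : group) (f : A -> T) (w : list (A * bool)) : T :=
  fold_right (fun p acc => gmul T (lett T (f (fst p)) (snd p)) acc) (gone T) w.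

Definition winv {A : Type} (w : list (A * bool)) : list (A * bool) :=
  rev (map (fun p => (fst p, negb (snd p))) w).

Lemma evalW_app {A} (T : group) (f : A -> T) w1 w2 :
  evalW T f (w1 ++ w2) = gmul T (evalW T f w1) (evalW T f w2).
Proof.
  induction w1 as [|p w1 IH]; simpl.
  - rewrite gmul1l. reflexivity.
  - rewrite IH, gmulA. reflexivity.
Qed.

Lemma evalW_inv {A} (T : group) (f : A -> T) w : evalW T f (winv w) = ginv T (evalW T f w).
Proof.
  induction w as [|[a s] w IH]; unfold winv in *; simpl.
  - symmetry; apply inv_one.
  - rewrite evalW_app, IH, inv_mul. simpl. rewrite gmul1r. f_equal.
    unfold lett; destruct s; simpl; [reflexivity|]. symmetry; apply inv_inv.
Qed.

Lemma evalW_ext {A} (T : group) (f g : A -> T) w :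
  (forall p, In p w -> f (fst p) = g (fst p)) -> evalW T f w = evalW T g w.
Proof.
  induction w as [|p w IH]; simpl; intros H; [reflexivity|].
  rewrite H by auto. rewrite IH by auto. reflexivity.
Qed.

Lemma ievalT_evalW (T : group) (tau : nat -> T) w : ievalT T tau w = evalW T tau w.
Proof. induction w as [|[i s] w IH]; simpl; [reflexivity|]. rewrite IH; reflexivity. Qed.

Lemma eval_word_evalW (G : group) (w : list (G * bool)) : eval_word w = evalW G (fun x => x) w.
Proof. induction w as [|[b s] w IH]; simpl; [reflexivity|]. rewrite IH; reflexivity. Qed.

Lemma evalW_map {A B} (T : group) (h : A -> B) (f : B -> T) (w : list (A * bool)) :
  evalW T f (map (fun p => (h (fst p), snd p)) w) = evalW T (fun a => f (h a)) w.
Proof. induction w as [|p w IH]; simpl; [reflexivity|]. rewrite IH; reflexivity. Qed.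

Section Gen.
Variable G : group.

Definition wover (S : G -> Prop) (w : list (G * bool)) : Prop :=
  forall p, In p w -> S (fst p).

Lemma gen_subgroup (S : G -> Prop) : is_subgroup (gen S).
Proof.
  split; [|split].
  - intros H (H1 & _ & _) _; auto.
  - intros x y Hx Hy H HH HS. pose proof HH as (H1 & H2 & H3). apply H2; [apply Hx|apply Hy]; auto.
  - intros x Hx H HH HS. pose proof HH as (H1 & H2 & H3). apply H3; apply Hx; auto.
Qed.

Lemma gen_incl (S : G -> Prop) x : S x -> gen S x.
Proof. intros Hx H HH HS. auto. Qed.

Lemma gen_min (S H : G -> Prop) : is_subgroup H -> subset S H -> subset (gen S) H.
Proof. intros HH HS x Hx. apply Hx; auto. Qed.

Lemma gen_mono (S S' : G -> Prop) : subset S S' -> subset (gen S) (gen S').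
Proof.
  intros HS. apply gen_min; [apply gen_subgroup|]. intros x Hx. apply gen_incl; auto.
Qed.

Lemma sub_evalW (H : G -> Prop) (w : list (G * bool)) :
  is_subgroup H -> wover H w -> H (evalW G (fun x => x) w).
Proof.
  intros (H1 & H2 & H3). induction w as [|[b s] w IH]; simpl; intros Hw; auto.
  apply H2.
  - unfold lett; destruct s; [|apply H3]; [apply (Hw (b, true))|apply (Hw (b, false))]; simpl; left; reflexivity.
  - apply IH. intros p Hp. apply Hw. simpl; auto.
Qed.

Lemma gen_word (S : G -> Prop) x :
  gen S x <-> exists w, wover S w /\ evalW G (fun y => y) w = x.
Proof.
  split.
  - intros Hx. apply Hx.
    + split; [|split].
      * exists []. split; [intros p []|reflexivity].
      * intros a b [wa [Ha Ea]] [wb [Hb Eb]]. exists (wa ++ wb). split.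
        -- intros p Hp. apply in_app_or in Hp. destruct Hp; auto.
        -- rewrite evalW_app, Ea, Eb. reflexivity.
      * intros a [wa [Ha Ea]]. exists (winv wa). split.
        -- intros p Hp. unfold winv in Hp. apply in_rev in Hp. apply in_map_iff in Hp.
           destruct Hp as [q [<- Hq]]. simpl. apply Ha; auto.
        -- rewrite evalW_inv, Ea. reflexivity.
    + intros y Hy. exists [(y, true)]. split.
      * intros p [<-|[]]. simpl. auto.
      * simpl. apply gmul1r.
  - intros [w [Hw <-]]. apply sub_evalW; [apply gen_subgroup|].
    intros p Hp. apply gen_incl. auto.
Qed.

Lemma reduce_exists (w : list (G * bool)) : exists w', reduced w' /\
  (forall p, In p w' -> In p w) /\
  forall (T : group) (f : G -> T), evalW T f w' = evalW T f w.
Proof.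
  induction w as [|[x s] w0 IH].
  - exists []. simpl. auto.
  - destruct IH as [w0' [Hr [Hin Hev]]].
    destruct w0' as [|[y t] w1] eqn:E0.
    + exists [(x, s)]. simpl. split; [auto|]. split.
      * intros p [<-|[]]; auto.
      * intros T f. rewrite <- Hev. reflexivity.
    + destruct (classic (x = y /\ s <> t)) as [[Exy Est]|Hn].
      * exists w1. split; [simpl in Hr; tauto|]. split.
        -- intros p Hp. right. apply Hin. simpl; auto.
        -- intros T f. simpl. rewrite <- Hev. simpl. subst y.
           rewrite gmulA. replace (gmul T (lett T (f x) s) (lett T (f x) t)) with (gone T).
           ++ rewrite gmul1l; reflexivity.
           ++ unfold lett; destruct s, t; try congruence; symmetry;
              [apply gmulVr|apply gmulVl].
      * exists ((x, s) :: (y, t) :: w1). split; [simpl; simpl in Hr; tauto|]. split.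
        -- intros p [<-|Hp]; [left; auto|right; apply Hin; auto].
        -- intros T f. simpl. rewrite <- Hev. reflexivity.
Qed.

Lemma free_eval1 (H B : G -> Prop) : free_basis H B ->
  forall w, wover B w -> evalW G (fun y => y) w = gone G ->
  forall (T : group) (f : G -> T), evalW T f w = gone T.
Proof.
  intros [_ Hf] w Hw E T f.
  destruct (reduce_exists w) as [w' [Hr [Hin Hev]]].
  destruct w' as [|p w''].
  - rewrite <- Hev. reflexivity.
  - exfalso. apply (Hf (p :: w'')); [discriminate| | auto |].
    + apply Forall_forall. intros q Hq. apply Hw, Hin; auto.
    + rewrite eval_word_evalW, Hev. auto.
Qed.

Lemma ext_hom (H B : G -> Prop) : free_basis H B ->
  forall (T : group) (f : G -> T), exists phi : G -> T,
  forall w, wover B w -> phi (evalW G (fun y => y) w) = evalW T f w.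
Proof.
  intros fb T f.
  exists (fun x => match excluded_middle_informative
            (exists w, wover B w /\ evalW G (fun y => y) w = x) with
          | left e => evalW T f (proj1_sig (constructive_indefinite_description _ e))
          | right _ => gone T end).
  intros w Hw.
  destruct excluded_middle_informative as [e|n]; [|exfalso; apply n; eauto].
  destruct (constructive_indefinite_description _ e) as [w0 [Hw0 E0]]. simpl.
  assert (K : evalW T f (winv w0 ++ w) = gone T).
  { apply (free_eval1 H B fb).
    - intros p Hp. apply in_app_or in Hp. destruct Hp as [Hp|Hp]; auto.
      unfold winv in Hp. apply in_rev in Hp. apply in_map_iff in Hp.
      destruct Hp as [q [<- Hq]]. simpl. apply (Hw0 q); auto.
    - rewrite evalW_app, evalW_inv, E0. apply gmulVl. }
  rewrite evalW_app, evalW_inv in K.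
  apply inv_uniq in K. rewrite inv_inv in K. auto.
Qed.

End Gen.


Lemma ieval_single (T : group) (tau : nat -> T) i : ievalT T tau [(i, true)] = tau i.
Proof. simpl. unfold lett. apply gmul1r. Qed.

Lemma evalW_single {A} (T : group) (f : A -> T) a : evalW T f [(a, true)] = f a.
Proof. simpl. unfold lett. apply gmul1r. Qed.

Section Hopf.
Variable G : group.

Fixpoint pos (x : G) (l : list G) : nat :=
  match l with
  | [] => 0
  | y :: l' => if excluded_middle_informative (x = y) then 0 else S (pos x l')
  end.

Lemma pos_spec x l : In x l -> pos x l < length l /\ nth (pos x l) l (gone G) = x.
Proof.
  induction l as [|y l IH]; simpl; [tauto|].
  intros Hx. destruct excluded_middle_informative as [E|E].
  - split; [lia|auto].
  - destruct Hx as [Hx|Hx]; [congruence|]. destruct (IH Hx). split; [lia|auto].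
Qed.

Lemma pos_nth l i : NoDup l -> i < length l -> pos (nth i l (gone G)) l = i.
Proof.
  intros Hl Hi.
  assert (Hin : In (nth i l (gone G)) l) by (apply nth_In; auto).
  destruct (pos_spec _ _ Hin) as [H1 H2].
  eapply NoDup_nth; eauto.
Qed.

Lemma subgroup_of_gen (H S : G -> Prop) : (forall x, H x <-> gen S x) -> is_subgroup H.
Proof.
  intros E. destruct (gen_subgroup G S) as (H1 & H2 & H3).
  split; [|split]; intros; apply E; [apply H1|apply H2|apply H3]; try apply E; auto.
Qed.

Lemma hom_on (H B : G -> Prop) (fb : free_basis H B) (T : group) (f : G -> T) (phi : G -> T) :
  (forall w, wover G B w -> phi (evalW G (fun y => y) w) = evalW T f w) ->
  forall w, wover G H w -> phi (evalW G (fun y => y) w) = evalW T phi w.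
Proof.
  intros Hphi.
  destruct fb as [HB _].
  assert (HS : is_subgroup H) by (eapply subgroup_of_gen; eauto).
  assert (Hw : forall x, H x -> exists w, wover G B w /\ evalW G (fun y => y) w = x).
  { intros x Hx. apply gen_word. apply HB; auto. }
  assert (Hm : forall x y, H x -> H y -> phi (gmul G x y) = gmul T (phi x) (phi y)).
  { intros x y Hx Hy. destruct (Hw x Hx) as [wx [Bx <-]]. destruct (Hw y Hy) as [wy [By <-]].
    rewrite <- evalW_app, !Hphi, evalW_app; auto.
    intros p Hp. apply in_app_or in Hp. destruct Hp; auto. }
  assert (Hi : forall x, H x -> phi (ginv G x) = ginv T (phi x)).
  { intros x Hx. destruct (Hw x Hx) as [wx [Bx <-]].
    rewrite <- evalW_inv, !Hphi, evalW_inv; auto.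
    intros p Hp. unfold winv in Hp. apply in_rev in Hp. apply in_map_iff in Hp.
    destruct Hp as [q [<- Hq]]. simpl. apply (Bx q); auto. }
  assert (H1 : phi (gone G) = gone T).
  { change (gone G) with (evalW G (fun y : G => y) []). rewrite Hphi; [reflexivity|].
    intros p []. }
  induction w as [|[x s] w IH]; intros Hwo; simpl; auto.
  assert (Hx : H x) by (apply (Hwo (x, s)); simpl; auto).
  assert (Hr : wover G H w) by (intros p Hp; apply Hwo; simpl; auto).
  assert (Hl : H (lett G x s)).
  { unfold lett; destruct s; auto. destruct HS as (_ & _ & H3); auto. }
  assert (He : H (evalW G (fun y => y) w)) by (apply sub_evalW; auto).
  rewrite (Hm _ _ Hl He), (IH Hr). f_equal.
  unfold lett; destruct s; auto.
Qed.

Lemma hopf (H B : G -> Prop) (bl xl : list G) :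
  free_basis H B -> NoDup bl -> (forall b, In b bl -> B b) ->
  (forall x, H x <-> gen_list xl x) -> length xl <= length bl ->
  length xl = length bl /\ NoDup xl /\
  (forall w, w <> [] -> wover G (fun y => In y xl) w -> reduced w ->
     evalW G (fun y => y) w <> gone G).
Proof.
  intros fb Hbl HblB Hxl Hlen.
  set (n := length bl).
  set (xl' := xl ++ repeat (gone G) (n - length xl)).
  assert (Hlen' : length xl' = n) by (unfold xl'; rewrite app_length, repeat_length; lia).
  assert (HS : is_subgroup H) by (destruct fb as [HB _]; eapply subgroup_of_gen; eauto).
  assert (Hxl'H : forall x, In x xl' -> H x).
  { intros x Hx. unfold xl' in Hx. apply in_app_or in Hx. destruct Hx as [Hx|Hx].
    - apply Hxl. apply gen_incl. auto.
    - apply repeat_spec in Hx. subst. destruct HS; auto. }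
  assert (HxlHxl' : forall x, H x -> gen_list xl' x).
  { intros x Hx. apply Hxl in Hx. revert Hx. apply gen_mono. intros y Hy.
    unfold xl'. apply in_or_app. auto. }
  set (ft := fun m (tau : nat -> PermPart.pg m) (x : G) =>
         if excluded_middle_informative (In x bl) then tau (pos x bl) else gone (PermPart.pg m)).
  set (Psi := fun m (tau : nat -> PermPart.pg m) =>
         proj1_sig (constructive_indefinite_description _ (ext_hom G H B fb (PermPart.pg m) (ft m tau)))).
  assert (PsiB : forall m tau w, wover G B w ->
            Psi m tau (evalW G (fun y => y) w) = evalW (PermPart.pg m) (ft m tau) w).
  { intros m tau. unfold Psi.
    destruct (constructive_indefinite_description _ _) as [phi Hphi]. simpl. auto. }
  assert (PsiH : forall m tau w, wover G H w ->
            Psi m tau (evalW G (fun y => y) w) = evalW (PermPart.pg m) (Psi m tau) w).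
  { intros m tau. eapply hom_on; eauto. }
  assert (Psibl : forall m tau i, i < n -> Psi m tau (nth i bl (gone G)) = tau i).
  { intros m tau i Hi.
    assert (E : nth i bl (gone G) = evalW G (fun y => y) [(nth i bl (gone G), true)])
      by (rewrite evalW_single; auto).
    rewrite E, PsiB.
    - rewrite evalW_single. unfold ft.
      destruct excluded_middle_informative as [_|N]; [|exfalso; apply N, nth_In; auto].
      rewrite pos_nth; auto.
    - intros p [<-|[]]. simpl. apply HblB, nth_In. auto. }
  assert (surj : forall m (ts : nat -> PermPart.pg m), exists psi : G -> PermPart.pg m,
            (forall i, i < n -> psi (nth i xl' (gone G)) = ts i) /\
            (forall w, wover G H w -> psi (evalW G (fun y => y) w) = evalW (PermPart.pg m) psi w)).
  { intros m ts.
    assert (Hinj : forall t t', (forall i, lt i n -> Psi m t (nth i xl' (gone G)) = Psi m t' (nth i xl' (gone G))) ->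
              forall i, lt i n -> t i = t' i).
    { intros t t' Heq i Hi.
      rewrite <- (Psibl m t i Hi), <- (Psibl m t' i Hi).
      assert (Hb : gen_list xl' (nth i bl (gone G))).
      { apply HxlHxl'. pose proof fb as [HB _]. apply HB, gen_incl, HblB, nth_In. auto. }
      apply gen_word in Hb. destruct Hb as [w [Hw <-]].
      assert (HwH : wover G H w) by (intros p Hp; apply Hxl'H, Hw; auto).
      rewrite !PsiH by auto. apply evalW_ext.
      intros p Hp. specialize (Hw p Hp). destruct (pos_spec _ _ Hw) as [P1 P2].
      rewrite <- P2. apply Heq. lia. }
    destruct (@PermPart.fin_surj m n (fun (tau : nat -> PermPart.pg m) (i : nat) => Psi m tau (nth i xl' (gone G))) Hinj ts) as [tau Htau].
    exists (Psi m tau). split; auto. }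
  destruct (@PermPart.rf [(0, true)]) as [m0 [tau0 Ht0]]; [discriminate|simpl; auto|].
  rewrite ieval_single in Ht0.
  assert (Psi1 : forall m (psi : G -> PermPart.pg m),
            (forall w, wover G H w -> psi (evalW G (fun y => y) w) = evalW (PermPart.pg m) psi w) ->
            psi (gone G) = gone (PermPart.pg m)).
  { intros m psi Hp. change (gone G) with (evalW G (fun y : G => y) []).
    rewrite Hp; [reflexivity|intros p []]. }
  assert (Hl : length xl = n).
  { destruct (Nat.eq_dec (length xl) n) as [E|E]; auto. exfalso.
    destruct (surj m0 (fun _ => tau0 0)) as [psi [P1 P2]].
    specialize (P1 (n - 1) ltac:(lia)). unfold xl' in P1.
    rewrite app_nth2 in P1 by lia. rewrite nth_repeat in P1.
    rewrite (Psi1 _ _ P2) in P1. auto. }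
  assert (Exl : xl' = xl) by (unfold xl'; rewrite Hl, Nat.sub_diag; simpl; apply app_nil_r).
  split; [auto|split].
  - apply (NoDup_nth xl (gone G)). intros i j Hi Hj Eij.
    destruct (Nat.eq_dec i j) as [E|E]; auto. exfalso.
    destruct (surj m0 (fun k => if Nat.eq_dec k j then tau0 0 else gone (PermPart.pg m0))) as [psi [P1 P2]].
    rewrite Exl in P1.
    pose proof (P1 i ltac:(lia)) as Q1. pose proof (P1 j ltac:(lia)) as Q2.
    rewrite Eij, Q2 in Q1. destruct (Nat.eq_dec i j); [congruence|].
    destruct (Nat.eq_dec j j); [|congruence]. auto.
  - intros w wne Hw Hr Ew.
    set (iw := map (fun p => (pos (fst p) xl, snd p)) w).
    assert (Hir : ireduced iw).
    { unfold iw. clear wne Ew. induction w as [|[x s] w IH]; simpl; auto.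
      split.
      - destruct w as [|[y t] w']; simpl; auto. intros [E1 E2]. simpl in Hr.
        apply (proj1 Hr). split; auto.
        assert (Hx : In x xl) by (apply (Hw (x, s)); simpl; auto).
        assert (Hy : In y xl) by (apply (Hw (y, t)); simpl; auto).
        destruct (pos_spec _ _ Hx) as [_ X2]. destruct (pos_spec _ _ Hy) as [_ Y2].
        rewrite <- X2, <- Y2, E1. auto.
      - apply IH.
        + intros p Hp. apply Hw. simpl; auto.
        + destruct w as [|[y t] w']; simpl in *; tauto. }
    destruct (@PermPart.rf iw) as [m [ts Hts]].
    { unfold iw. destruct w; simpl; congruence. }
    { exact Hir. }
    destruct (surj m ts) as [psi [P1 P2]].
    apply Hts. rewrite ievalT_evalW. unfold iw. rewrite (evalW_map (PermPart.pg m) (fun x => pos x xl)).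
    rewrite <- (evalW_ext (PermPart.pg m) psi).
    + rewrite <- P2, Ew. apply Psi1; auto.
      intros p Hp. apply Hxl'H. rewrite Exl. apply Hw. auto.
    + intros p Hp. specialize (Hw p Hp). destruct (pos_spec _ _ Hw) as [X1 X2].
      rewrite <- P1 by lia. rewrite Exl, X2. reflexivity.
Qed.

End Hopf.


Section FP.
Variable G : group.
Notation ev := (evalW G (fun y : G => y)).

Lemma reduced_app_l (u v : list (G * bool)) : reduced (u ++ v) -> reduced u /\ reduced v.
Proof.
  induction u as [|[x s] u IH]; simpl; [tauto|].
  intros [H1 H2]. destruct (IH H2) as [R1 R2]. split; auto. split; auto.
  destruct u as [|[y t] u']; simpl in *; auto.
Qed.

Lemma reduced_app_sep (c : G) (u v : list (G * bool)) : reduced u -> reduced v ->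
  (forall p, In p u -> fst p <> c) -> (forall q, hd_error v = Some q -> fst q = c) ->
  reduced (u ++ v).
Proof.
  induction u as [|[x s] u IH]; simpl; auto.
  intros [H1 H2] Rv Hu Hv. split; [|apply IH; auto].
  destruct u as [|[y t] u']; simpl in *; auto.
  destruct v as [|[y t] v']; simpl in *; auto.
  intros [E _]. specialize (Hv _ eq_refl). simpl in Hv. apply (Hu (x, s)); auto. simpl. congruence.
Qed.

Lemma gen_ext (S S' : G -> Prop) : (forall x, S x <-> S' x) -> forall x, gen S x <-> gen S' x.
Proof.
  intros E x. split; apply gen_mono; intros y Hy; apply E; auto.
Qed.

Lemma count_or (B : G -> Prop) n :
  (exists l, length l < n /\ forall x, B x <-> In x l) \/
  (exists bl, NoDup bl /\ length bl = n /\ forall b, In b bl -> B b).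
Proof.
  induction n as [|n IH].
  - right. exists []. simpl. repeat split; auto. constructor. intros b [].
  - destruct IH as [[l [Hl E]]|[bl [Hn [Hl Hb]]]].
    + left. exists l. split; auto.
    + destruct (classic (exists b, B b /\ ~ In b bl)) as [[b [Bb Nb]]|N].
      * right. exists (b :: bl). simpl. repeat split; auto.
        -- constructor; auto.
        -- intros x [<-|Hx]; auto.
      * left. exists bl. split; [lia|]. intros x. split; auto.
        intros Bx. apply NNPP. intros Nx. apply N. eauto.
Qed.

Definition span_c (c : G) : list (G * bool) -> list (G * bool) * list (G * bool) :=
  fix F w := match w with
  | [] => ([], [])
  | p :: w' => if excluded_middle_informative (fst p = c) then ([], w)
               else let (a, b) := F w' in (p :: a, b)
  end.

Lemma span_c_spec c w : let (a, b) := span_c c w in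
  w = a ++ b /\ (forall p, In p a -> fst p <> c) /\ (forall q, hd_error b = Some q -> fst q = c).
Proof.
  induction w as [|p w IH]; simpl.
  - split; auto. split; [intros p []|intros q H; discriminate].
  - destruct excluded_middle_informative as [E|E].
    + split; auto. split; [intros q []|]. intros q H; simpl in H; congruence.
    + destruct (span_c c w) as [a b]. destruct IH as [I1 [I2 I3]].
      split; [simpl; congruence|]. split; auto.
      intros q [<-|Hq]; auto.
Qed.

Lemma c_notin (c : G) (gl : list G) :
  NoDup (c :: gl) ->
  (forall w, w <> [] -> wover G (fun y => In y (c :: gl)) w -> reduced w -> ev w <> gone G) ->
  ~ gen_list gl c.
Proof.
  intros Hnd Hfree Hc. apply gen_word in Hc. destruct Hc as [w0 [Hw0 E0]].
  destruct (reduce_exists G w0) as [v [Hr [Hin Hev]]].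
  assert (Nc : ~ In c gl) by (inversion Hnd; auto).
  apply (Hfree (v ++ [(c, false)])).
  - destruct v; discriminate.
  - intros p Hp. apply in_app_or in Hp. simpl.
    destruct Hp as [Hp|[<-|[]]]; [right; apply (Hw0 p), Hin, Hp | left; reflexivity].
  - apply reduced_app_sep with (c := c); simpl; auto.
    + intros p Hp Ep. apply Nc. rewrite <- Ep. apply (Hw0 p), Hin, Hp.
    + intros q Hq; inversion Hq; auto.
  - rewrite evalW_app, Hev, E0. simpl. unfold lett. rewrite gmul1r. apply gmulVr.
Qed.

Lemma fp (c : G) (gl : list G) (BR R : G -> Prop) :
  NoDup (c :: gl) ->
  (forall w, w <> [] -> wover G (fun y => In y (c :: gl)) w -> reduced w -> ev w <> gone G) ->
  (forall x, R x -> gen_list gl x) ->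
  free_basis R BR ->
  forall w, w <> [] -> wover G (fun y => BR y \/ y = c) w -> reduced w -> ev w <> gone G.
Proof.
  intros Hnd Hfree HR [HRB HBfree].
  assert (Nc : ~ In c gl) by (inversion Hnd; auto).
  assert (cA := c_notin c gl Hnd Hfree).
  assert (main : forall n w, length w <= n -> reduced w -> wover G (fun y => BR y \/ y = c) w ->
    exists u, reduced u /\ wover G (fun y => In y (c :: gl)) u /\ ev u = ev w /\
      (u = [] <-> w = []) /\
      (forall s, (exists t, u = (c, s) :: t) <-> (exists t, w = (c, s) :: t))).
  { induction n as [|n IH]; intros w Hl Hr Hw.
    - destruct w; simpl in Hl; [|lia]. exists []. repeat split; auto. intros p [].
    - destruct w as [|[x s] w'].
      + exists []. repeat split; auto. intros p [].
      + destruct (classic (x = c)) as [Ex|Ex].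
        * subst x.
          assert (Hr' : reduced w') by (simpl in Hr; tauto).
          destruct (IH w') as [u' [U1 [U2 [U3 [U4 U5]]]]]; [simpl in Hl; lia|auto|
            intros p Hp; apply Hw; simpl; auto|].
          exists ((c, s) :: u'). split; [|split; [|split; [|split]]].
          -- simpl. split; auto. destruct u' as [|[y t] u'']; auto.
             intros [Ey Est]. subst y.
             destruct (proj1 (U5 t) (ex_intro _ u'' eq_refl)) as [t' Ew'].
             subst w'. simpl in Hr. apply (proj1 Hr). auto.
          -- intros p [<-|Hp]; simpl; auto. apply U2; auto.
          -- simpl. rewrite U3. auto.
          -- split; discriminate.
          -- intros s'. split; intros [t E]; inversion E; subst; eauto.
        * pose proof (span_c_spec c ((x, s) :: w')) as Sp.
          simpl in Sp. destruct excluded_middle_informative as [E|_]; [simpl in E; congruence|].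
          destruct (span_c c w') as [a b] eqn:Eab.
          destruct Sp as [Ew [Ha Hb]].
          injection Ew as Ew. set (beta := (x, s) :: a).
          assert (Ewb : (x, s) :: w' = beta ++ b) by (unfold beta; simpl; congruence).
          rewrite Ewb in Hr, Hw. destruct (reduced_app_l _ _ Hr) as [Rbeta Rb].
          assert (Hbeta : wover G BR beta).
          { intros p Hp. assert (Hp' : In p (beta ++ b)) by (apply in_or_app; auto).
            destruct (Hw p Hp') as [Hb'|Hc']; auto. exfalso.
            apply (Ha p); [exact Hp|exact Hc']. }
          assert (Hbne : ev beta <> gone G).
          { intros E. apply (HBfree beta); [discriminate| |auto|].
            - apply Forall_forall. auto.
            - rewrite eval_word_evalW. auto. }
          assert (HbA : gen_list gl (ev beta)).
          { apply HR, HRB, gen_word. eauto. }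
          apply gen_word in HbA. destruct HbA as [v0 [Hv0 Ev0]].
          destruct (reduce_exists G v0) as [v [Rv [Hvin Hvev]]].
          assert (Hvgl : forall p, In p v -> In (fst p) gl) by (intros p Hp; apply (Hv0 p); auto).
          assert (Hvne : v <> []) by (intros ->; apply Hbne; rewrite <- Ev0, <- Hvev; auto).
          destruct (IH b) as [u'' [U1 [U2 [U3 [U4 U5]]]]].
          { rewrite Ewb in Hl. rewrite app_length in Hl. unfold beta in Hl. simpl in Hl. lia. }
          { auto. }
          { intros p Hp. apply Hw. apply in_or_app. auto. }
          exists (v ++ u''). split; [|split; [|split; [|split]]].
          -- apply reduced_app_sep with (c := c); auto.
             ++ intros p Hp Ep. apply Nc. rewrite <- Ep. auto.
             ++ intros q Hq. destruct u'' as [|q' u3]; [discriminate|]. simpl in Hq.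
                inversion Hq; subst q'.
                destruct b as [|[y t] b']; [destruct U4 as [_ U4']; discriminate (U4' eq_refl)|].
                specialize (Hb _ eq_refl). simpl in Hb. subst y.
                destruct (proj2 (U5 t) (ex_intro _ b' eq_refl)) as [t' Eu].
                inversion Eu; subst. reflexivity.
          -- intros p Hp. apply in_app_or in Hp. destruct Hp as [Hp|Hp]; auto.
             simpl. right. auto.
          -- rewrite evalW_app, Hvev, Ev0, U3, Ewb, evalW_app. reflexivity.
          -- split; intros E; [|discriminate]. destruct v; [congruence|discriminate].
          -- intros s'. split; intros [t E].
             ++ destruct v as [|p v']; [congruence|]. simpl in E. inversion E; subst.
                exfalso. apply Nc. apply (Hvgl (c, s')). simpl; auto.
             ++ inversion E. congruence. }
  intros w wne Hw Hr.
  destruct (main (length w) w) as [u [U1 [U2 [U3 [U4 _]]]]]; auto.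
  rewrite <- U3. apply Hfree; auto. intros E. apply wne, U4, E.
Qed.

End FP.


Lemma step (G : group) (k r : nat) (c : G) (gl : list G) (R P : G -> Prop) :
  k_free G k -> r + 1 <= k -> length gl <= r -> (forall x, R x -> gen_list gl x) ->
  rank_eq R r -> rank_le P r -> (forall x, P x <-> gen (fun y => R y \/ y = c) x) ->
  rank_le (gen_list (c :: gl)) r.
Proof.
  intros kf Hrk Hgl HRA [HRr HRmin] [pl [Hpl EP]] EPc.
  assert (HH : rank_le (gen_list (c :: gl)) k).
  { exists (c :: gl). split; [simpl; lia|]. intros x; tauto. }
  destruct (kf _ HH) as [B fb].
  destruct (count_or G B (r + 1)) as [[l [Hl El]]|[bl [Hnd [Hlen HbB]]]].
  - exists l. split; [lia|]. intros x. destruct fb as [HB _]. rewrite HB. apply gen_ext. auto.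
  - destruct (hopf G (gen_list (c :: gl)) B bl (c :: gl) fb Hnd HbB (fun x => iff_refl _))
      as [L1 [L2 L3]]; [simpl; lia|].
    assert (HRk : rank_le R k).
    { destruct HRr as [rl [Hrl ER]]. exists rl. split; [lia|auto]. }
    destruct (kf _ HRk) as [BR fbR].
    pose proof fbR as [HRB _].
    destruct (count_or G BR r) as [[l [Hl El]]|[brl [Hnd' [Hlen' HbB']]]].
    + exfalso. apply (HRmin (length l) Hl). exists l. split; auto.
      intros x. rewrite HRB. apply gen_ext. auto.
    + assert (cA := c_notin G c gl L2 L3).
      assert (Ndc : NoDup (c :: brl)).
      { constructor; auto. intros Hc. apply cA, HRA, HRB, gen_incl, HbB'. auto. }
      assert (fbP : free_basis P (fun y => BR y \/ y = c)).
      { split.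
        - intros x. rewrite EPc. split.
          + apply gen_min; [apply gen_subgroup|]. intros y [Hy | ->].
            * apply HRB in Hy. revert Hy. apply gen_mono. intros z Hz; auto.
            * apply gen_incl. auto.
          + apply gen_mono. intros y [Hy | ->]; auto. left. apply HRB, gen_incl. auto.
        - intros w wne Hw Hr. rewrite eval_word_evalW.
          apply (fp G c gl BR R L2 L3 HRA fbR w wne); auto.
          intros p Hp. rewrite Forall_forall in Hw. apply Hw. auto. }
      destruct (hopf G P _ (c :: brl) pl fbP Ndc) as [M1 _].
      * intros b [<-|Hb]; auto.
      * intros x. apply EP.
      * simpl. lia.
      * simpl in M1. lia.
Qed.


Lemma gpow_sub (G : group) (H : G -> Prop) (c : G) n :
  is_subgroup H -> H c -> H (gpow c n).
Proof.
  intros (H1 & H2 & H3) Hc. induction n; simpl; auto.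
Qed.

Lemma zpow_sub (G : group) (H : G -> Prop) (c : G) z :
  is_subgroup H -> H c -> H (zpow c z).
Proof.
  intros HS Hc. pose proof HS as (H1 & H2 & H3).
  destruct z; simpl; auto; [|apply H3]; apply gpow_sub; auto.
Qed.

Lemma gen_list_sub (G : group) (l : list G) : is_subgroup (gen_list l).
Proof. apply gen_subgroup. Qed.

Section Main.
Variables (k : nat) (G : group) (L : complex) (C : vert L -> G -> Prop) (r : nat)
  (W : (vert L -> Prop) -> Prop).
Hypotheses (kf : k_free G k) (lab : labeling C) (Hrk : r + 1 <= k)
  (sat : saturated W) (conn : sat_connected W) (IR : forall s, W s -> IR_eq C s r).

Definition St (gl : list G) : Prop := length gl <= r /\ subset (gen_list gl) (Theta_sat C W).

Lemma C_in_W s v x : W s -> s v -> C v x -> Theta_sat C W x.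
Proof. intros Ws sv Cx. apply gen_incl. exists s, v. auto. Qed.

Lemma add_vertex (tau rho : vert L -> Prop) (v : vert L) (gl : list G) :
  W tau -> face rho tau -> rank_eq (Theta_simplex C rho) r -> tau v ->
  St gl -> subset (Theta_simplex C rho) (gen_list gl) ->
  exists gl', St gl' /\ subset (gen_list gl) (gen_list gl') /\
    forall x, C v x -> gen_list gl' x.
Proof.
  intros Wt [[v0 rv0] Hrt] Hrr tv [Hgl Hsub] HR.
  destruct (proj1 (lab v)) as [c Hc].
  assert (Cc : C v c).
  { apply Hc. exists 1%Z. simpl. symmetry. apply gmul1r. }
  assert (HP : rank_le (Theta_simplex C (fun u => rho u \/ u = v)) r).
  { apply (proj1 (IR tau Wt)). split.
    - exists v. auto.
    - intros u [Hu | ->]; auto. }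
  assert (Hstep : rank_le (gen_list (c :: gl)) r).
  { apply (step G k r c gl (Theta_simplex C rho) (Theta_simplex C (fun u => rho u \/ u = v)));
      auto.
    intros x. unfold Theta_simplex at 1. split.
    - apply gen_min; [apply gen_subgroup|]. intros y [u [[Hu | ->] Cy]].
      + apply gen_incl. left. apply gen_incl. exists u. auto.
      + apply Hc in Cy. destruct Cy as [z ->]. apply zpow_sub; [apply gen_subgroup|].
        apply gen_incl. auto.
    - apply gen_min; [apply gen_subgroup|]. intros y [Hy | ->].
      + revert Hy. apply gen_mono. intros z [u [Hu Cz]]. exists u. auto.
      + apply gen_incl. exists v. auto. }
  destruct Hstep as [gl' [Hl' E']].
  exists gl'. split; [split|split].
  - auto.
  - intros x Hx. apply (proj2 (E' x)) in Hx. revert Hx. apply gen_min; [apply gen_subgroup|].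
    intros y [<- | Hy].
    + eapply C_in_W; eauto.
    + apply Hsub, gen_incl. auto.
  - intros x Hx. apply (proj1 (E' x)). revert Hx. apply gen_mono. intros y Hy. simpl. right. auto.
  - intros x Cx. apply (proj1 (E' x)). apply Hc in Cx. destruct Cx as [z ->].
    apply zpow_sub; [apply gen_subgroup|]. apply gen_incl. simpl. left. auto.
Qed.

Lemma add_vertices (tau rho : vert L -> Prop) (vl : list (vert L)) :
  W tau -> face rho tau -> rank_eq (Theta_simplex C rho) r -> (forall v, In v vl -> tau v) ->
  forall gl, St gl -> subset (Theta_simplex C rho) (gen_list gl) ->
  exists gl', St gl' /\ subset (gen_list gl) (gen_list gl') /\
    forall v x, In v vl -> C v x -> gen_list gl' x.
Proof.
  intros Wt Hf Hrr. induction vl as [|v vl IH]; intros Hvl gl Sgl HR.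
  - exists gl. split; auto. split; [intros x; auto|]. intros v x [].
  - destruct (add_vertex tau rho v gl Wt Hf Hrr (Hvl v (or_introl eq_refl)) Sgl HR)
      as [gl1 [S1 [I1 C1]]].
    destruct (IH (fun u Hu => Hvl u (or_intror Hu)) gl1 S1) as [gl2 [S2 [I2 C2]]].
    { intros x Hx. apply I1, HR, Hx. }
    exists gl2. split; auto. split; [intros x Hx; apply I2, I1, Hx|].
    intros u x [<- | Hu] Cx; [apply I2, C1, Cx | apply (C2 u x Hu Cx)].
Qed.

Lemma one_step (a b : vert L -> Prop) (gl : list G) :
  sat_adj W a b -> St gl -> subset (Theta_simplex C a) (gen_list gl) ->
  exists gl', St gl' /\ subset (gen_list gl) (gen_list gl') /\
    subset (Theta_simplex C b) (gen_list gl').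
Proof.
  intros [Wa [Wb [Hab | Hba]]] Sgl Ha.
  - destruct (proj2 (IR a Wa)) as [rho [[[v0 rv0] Hra] Hrr]].
    destruct (simp_fin L b (proj1 sat b Wb)) as [vl Hvl].
    destruct (add_vertices b rho vl Wb) with (gl := gl) as [gl' [S' [I' C']]]; auto.
    + split; [exists v0; auto|]. intros u Hu. apply (proj2 Hab), Hra, Hu.
    + intros v Hv. apply Hvl. auto.
    + intros x Hx. apply Ha. revert Hx. apply gen_mono. intros y [u [Hu Cy]].
      exists u. split; auto.
    + exists gl'. split; auto. split; auto.
      apply gen_min; [apply gen_subgroup|]. intros y [u [Hu Cy]].
      apply (C' u); auto. apply Hvl. auto.
  - exists gl. split; auto. split; [intros x; auto|].
    intros x Hx. apply Ha. revert Hx. apply gen_mono. intros y [u [Hu Cy]].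
    exists u. split; auto. apply (proj2 Hba). auto.
Qed.

Lemma path_step (a b : vert L -> Prop) :
  clos_refl_trans _ (sat_adj W) a b -> forall gl, St gl ->
  subset (Theta_simplex C a) (gen_list gl) ->
  exists gl', St gl' /\ subset (gen_list gl) (gen_list gl') /\
    subset (Theta_simplex C b) (gen_list gl').
Proof.
  induction 1 as [a b Hab|a|a b c Hab IH1 Hbc IH2]; intros gl Sgl Ha.
  - eapply one_step; eauto.
  - exists gl. split; auto. split; auto. intros x; auto.
  - destruct (IH1 gl Sgl Ha) as [gl1 [S1 [I1 T1]]].
    destruct (IH2 gl1 S1 T1) as [gl2 [S2 [I2 T2]]].
    exists gl2. split; auto. split; auto. intros x Hx. apply I2, I1, Hx.
Qed.

Lemma multi (s0 : vert L -> Prop) (sl : list (vert L -> Prop)) :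
  W s0 -> (forall s, In s sl -> W s) ->
  exists gl, St gl /\ subset (Theta_simplex C s0) (gen_list gl) /\
    forall s, In s sl -> subset (Theta_simplex C s) (gen_list gl).
Proof.
  intros W0. induction sl as [|s sl IH]; intros Hsl.
  - destruct (simp_ne L s0 (proj1 sat s0 W0)) as [v0 Hv0].
    assert (Hff : face s0 s0) by (split; [exists v0; auto|auto]).
    destruct (proj1 (IR s0 W0) s0 Hff) as [gl [Hl E]].
    exists gl. split; [split|split].
    + auto.
    + intros x Hx. apply (proj2 (E x)) in Hx. revert Hx. apply gen_mono. intros y [v [Hv Cy]].
      exists s0, v. auto.
    + intros x Hx. apply (proj1 (E x)). auto.
    + intros s [].
  - destruct IH as [gl [Sgl [H0 Hs]]]; [intros s' Hs'; apply Hsl; simpl; auto|].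
    destruct (path_step s0 s (conn s0 s W0 (Hsl s (or_introl eq_refl))) gl Sgl H0)
      as [gl' [S' [I' T']]].
    exists gl'. split; auto. split; [intros x Hx; apply I', H0, Hx|].
    intros s' [<- | Hs']; auto. intros x Hx. apply I', (Hs s' Hs'), Hx.
Qed.

Lemma collect_letters (xs : list G) :
  (forall x, In x xs -> exists s v, W s /\ s v /\ C v x) ->
  exists sl, (forall s, In s sl -> W s) /\
    forall x, In x xs -> exists s v, In s sl /\ s v /\ C v x.
Proof.
  induction xs as [|x xs IH]; intros Hxs.
  - exists []. split; intros ? [].
  - destruct IH as [sl [H1 H2]]; [intros y Hy; apply Hxs; simpl; auto|].
    destruct (Hxs x (or_introl eq_refl)) as [s [v [Ws [sv Cx]]]].
    exists (s :: sl). split.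
    + intros s' [<- | Hs']; auto.
    + intros y [<- | Hy].
      * exists s, v. simpl. auto.
      * destruct (H2 y Hy) as [s' [v' [I [Hs Hc]]]]. exists s', v'. simpl. auto.
Qed.

Definition Ysl (sl : list (vert L -> Prop)) : G -> Prop :=
  fun x => exists s v, In s sl /\ s v /\ C v x.

Lemma collect (fl : list G) :
  (forall f, In f fl -> Theta_sat C W f) ->
  exists sl, (forall s, In s sl -> W s) /\ forall f, In f fl -> gen (Ysl sl) f.
Proof.
  induction fl as [|f fl IH]; intros Hfl.
  - exists []. split; intros ? [].
  - destruct IH as [sl [H1 H2]]; [intros y Hy; apply Hfl; simpl; auto|].
    pose proof (Hfl f (or_introl eq_refl)) as Hf.
    unfold Theta_sat in Hf. apply gen_word in Hf. destruct Hf as [w [Hw Ew]].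
    destruct (collect_letters (map fst w)) as [sl' [H1' H2']].
    { intros x Hx. apply in_map_iff in Hx. destruct Hx as [p [<- Hp]]. apply (Hw p Hp). }
    exists (sl' ++ sl). split.
    + intros s Hs. apply in_app_or in Hs. destruct Hs; auto.
    + intros g [<- | Hg].
      * rewrite <- Ew. apply gen_word. exists w. split; auto.
        intros p Hp. destruct (H2' (fst p)) as [s [v [I [Hs Hc]]]].
        { apply in_map. auto. }
        exists s, v. split; auto. apply in_or_app. auto.
      * generalize (H2 g Hg). apply gen_mono. intros y [s [v [I [Hs Hc]]]].
        exists s, v. split; auto. apply in_or_app. auto.
Qed.

Lemma main_thm : local_rank_le (Theta_sat C W) r.
Proof.
  intros F [n [fl [Hfl EF]]] HF.
  destruct (collect fl) as [sl [HslW Hsl]].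
  { intros f Hf. apply HF, EF, gen_incl. auto. }
  destruct sl as [|s0 sl'].
  - exists (gen_list []). split; [|split].
    + exists []. split; [simpl; lia|]. intros x; tauto.
    + apply gen_mono. intros x [].
    + intros x Hx. apply EF in Hx. revert Hx. apply gen_min; [apply gen_subgroup|].
      intros f Hf. generalize (Hsl f Hf). apply gen_mono. intros y [s [v [[] _]]].
  - destruct (multi s0 (s0 :: sl')) as [gl [[Hl Hsub] [_ Hall]]].
    { apply HslW. simpl; auto. }
    { auto. }
    exists (gen_list gl). split; [|split].
    + exists gl. split; auto. intros x; tauto.
    + auto.
    + intros x Hx. apply EF in Hx. revert Hx. apply gen_min; [apply gen_subgroup|].
      intros f Hf. generalize (Hsl f Hf). apply gen_min; [apply gen_subgroup|].
      intros y [s [v [I [Hs Cy]]]]. apply (Hall s I). apply gen_incl. exists v. auto.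
Qed.

End Main.

Theorem lemma4p2 (k : nat) (G : group) (L : complex)
  (C : vert L -> G -> Prop) (r : nat)
  (W : (vert L -> Prop) -> Prop) :
  0 < k ->
  k_free G k ->
  (forall g : G, g <> gone G -> is_infinite_cyclic (centralizer g)) ->
  labeling C ->
  0 < r -> r <= k - 1 ->
  saturated W -> sat_connected W ->
  (forall s, W s -> IR_eq C s r) ->
  local_rank_le (Theta_sat C W) r.
Proof.
  intros Hk kf _ lab Hr Hrk sat conn IR.
  apply (main_thm k G L C r W); auto. lia.
Qed.
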